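(* Let $V\subseteq\mathcal V$ be finite, $\mathcal E,\mathcal F\in\mathit{DProg}(V)$, and $V'\subseteq\mathcal V$ with $|V'|=|V|$ and $V\cap V'=\emptyset$. Then (1) $\mathcal E\le_T^e\mathcal F$ iff $\mathcal F\models_{tot}(\mathcal E^\dagger(\Omega_{V,V'}),\Omega_{V,V'})$; (2) $\mathcal E\le_P^e\mathcal F$ iff $\mathcal F\models_{par}(I-\mathcal E^\dagger(\Omega_{V,V'}),\,I-\Omega_{V,V'})$.
   Context: $\mathcal V$ is a countably infinite set of qubit variables; $\mathcal H_V=\bigotimes_{q\in V}\mathcal H_q$ for finite $V$. $\mathcal D(\mathcal H)$: partial density operators; $\mathcal P(\mathcal H)$: effects; $\mathit{DProg}(V)$: completely positive trace-nonincreasing super-operators on $\mathcal L(\mathcal H_V)$. $\mathcal E^\dagger$ is the adjoint of $\mathcal E$: ${\rm tr}(\mathcal E(A)B)={\rm tr}(A\mathcal E^\dagger(B))$ for all $A,B$. Operators/super-operators on subsystems are implicitly extended by tensoring with identities. With $d=2^{|V|}$ and orthonormal bases $\{|i\rangle_V\}$, $\{|i\rangle_{V'}\}$, $\Omega_{V,V'}=|\omega\rangle\langle\omega|$ where $|\omega\rangle=\frac1{\sqrt d}\sum_{i=0}^{d-1}|i\rangle_V|i\rangle_{V'}$, and $I$ is the identity on $\mathcal H_V\otimes\mathcal H_{V'}$. (In the paper's notation, $\mathcal E^\dagger(N)=wp.\mathcal E.N$ and $I-\mathcal E^\dagger(I-N)=wlp.\mathcal E.N$, so the specification in (2) is $(wlp.\mathcal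 E.(I-\Omega),I-\Omega)$.) For finite $W$ and $M,N\in\mathcal P(\mathcal H_W)$, $\mathcal E\models_{tot}(M,N)$ iff for all finite $X\supseteq V\cup W$ and $\rho\in\mathcal D(\mathcal H_X)$, ${\rm tr}(M\rho)\le{\rm tr}(N\mathcal E(\rho))$; $\mathcal E\models_{par}(M,N)$ iff for all such $X,\rho$, ${\rm tr}(M\rho)\le{\rm tr}(N\mathcal E(\rho))+{\rm tr}(\rho)-{\rm tr}(\mathcal E(\rho))$. $\mathcal E\le_T^e\mathcal F$ (resp. $\le_P^e$) iff for every finite $W$ and $M,N\in\mathcal P(\mathcal H_W)$, $\mathcal E\models_{tot}(M,N)\Rightarrow\mathcal F\models_{tot}(M,N)$ (resp. with $\models_{par}$). *)

(* Defs.v *)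
From HB Require Import structures.
From mathcomp Require Import all_boot all_order all_algebra finmap.
From mathcomp Require Import complex.
From mathcomp Require Import Rstruct.
Set Implicit Arguments.
Unset Strict Implicit.
Unset Printing Implicit Defensive.
Import Order.TTheory GRing.Theory Num.Theory.
Local Open Scope ring_scope.

Definition C : numClosedFieldType := (Rdefinitions.R)[i].

(** Qubit variables: the countably infinite set nat.  A finite set of
    variables is a [{fset nat}].  The computational basis of
    H_X = ⊗_{q ∈ X} H_q (H_q = C^2) is indexed by assignments X -> bool. *)
Definition basis (X : {fset nat}) : finType := {ffun X -> bool}.

(** Linear operators on H_X, as matrices in the computational basis. *)
Definition op (X : {fset nat}) := basis X -> basis X -> C.

(** Restriction of a basis assignment on X to the variables of W
    (variables of W outside X get the dummy value false; only used with W ⊆ X). *)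
Definition restr (X W : {fset nat}) (s : basis X) : basis W :=
  [ffun w : W => if (insub (val w) : option X) is Some x then s x else false].

Definition glue (V X : {fset nat}) (u : basis V) (s : basis X) : basis X :=
  [ffun x : X => if (insub (val x) : option V) is Some v then u v else s x].

Definition optr (X : {fset nat}) (A : op X) : C := \sum_i A i i.
Definition opmul (X : {fset nat}) (A B : op X) : op X :=
  fun i j => \sum_k A i k * B k j.
Definition opone (X : {fset nat}) : op X := fun i j => (i == j)%:R.
Definition opsub (X : {fset nat}) (A B : op X) : op X := fun i j => A i j - B i j.
Definition opunit (X : {fset nat}) (v u : basis X) : op X :=
  fun i j => ((i == v) && (j == u))%:R.

Definition psd (X : {fset nat}) (A : op X) : Prop :=
  forall x : basis X -> C, 0 <= \sum_i \sum_j (x i)^* * A i j * x j.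

Definition pdo (X : {fset nat}) (rho : op X) : Prop := psd rho /\ optr rho <= 1.
Definition effect (X : {fset nat}) (M : op X) : Prop :=
  psd M /\ psd (opsub (@opone X) M).

(** Extension of an operator M on H_W to H_X (W ⊆ X): M ⊗ I_{X \ W}. *)
Definition extop (W X : {fset nat}) (M : op W) : op X :=
  fun s t => M (restr W s) (restr W t) *
             ([forall x : X, (val x \notin W) ==> (s x == t x)])%:R.

Definition super (V : {fset nat}) := op V -> op V.

(** Extension of a super-operator E on L(H_V) to L(H_X) (V ⊆ X): E ⊗ id_{X \ V}.
    ((E ⊗ id)(rho))(s,t) = E(rho_{s,t})(s|_V, t|_V) where rho_{s,t} is the
    block of rho with the X \ V components fixed to those of s and t. *)
Definition ext (V X : {fset nat}) (E : super V) (rho : op X) : op X :=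
  fun s t => E (fun u v => rho (glue u s) (glue v t)) (restr V s) (restr V t).

Definition linear_super (V : {fset nat}) (E : super V) : Prop :=
  forall (a : C) (A B : op V) (u v : basis V),
    E (fun i j => a * A i j + B i j) u v = a * E A u v + E B u v.

(** DProg(V): completely positive, trace-nonincreasing super-operators on L(H_V).
    Complete positivity: E ⊗ id is positive for every (qubit) ancilla X \ V. *)
Definition DProg (V : {fset nat}) (E : super V) : Prop :=
  [/\ linear_super E,
      (forall X : {fset nat}, (V `<=` X)%fset ->
         forall rho : op X, psd rho -> psd (ext E rho))
    & (forall rho : op V, psd rho -> optr (E rho) <= optr rho)].

(** The adjoint E^† : tr(E(A) B) = tr(A E^†(B)); concretely
    E^†(B)(u,v) = tr(E(|v><u|) B). *)
Definition adjoint (V : {fset nat}) (E : super V) : super V :=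
  fun B u v => optr (opmul (E (opunit v u)) B).

Definition sat_tot (V : {fset nat}) (E : super V) (W : {fset nat}) (M N : op W) : Prop :=
  forall X : {fset nat}, (V `|` W `<=` X)%fset -> forall rho : op X, pdo rho ->
    optr (opmul (@extop W X M) rho) <= optr (opmul (@extop W X N) (ext E rho)).

Definition sat_par (V : {fset nat}) (E : super V) (W : {fset nat}) (M N : op W) : Prop :=
  forall X : {fset nat}, (V `|` W `<=` X)%fset -> forall rho : op X, pdo rho ->
    optr (opmul (@extop W X M) rho) <=
      optr (opmul (@extop W X N) (ext E rho)) + optr rho - optr (ext E rho).

Definition refT (V : {fset nat}) (E F : super V) : Prop :=
  forall (W : {fset nat}) (M N : op W), effect M -> effect N ->
    sat_tot E M N -> sat_tot F M N.

Definition refP (V : {fset nat}) (E F : super V) : Prop :=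
  forall (W : {fset nat}) (M N : op W), effect M -> effect N ->
    sat_par E M N -> sat_par F M N.

(** Orthonormal basis {|i>} of H_X indexed by a finite type I (of size dim H_X):
    b i is the coordinate vector of |i>. *)
Definition orthonormal_basis (I : finType) (X : {fset nat}) (b : I -> basis X -> C) : Prop :=
  forall i j : I, \sum_s (b i s)^* * b j s = (i == j)%:R.

(** |omega> = 1/sqrt d * sum_i |i>_V |i>_V', d = 2^|V|, with the two bases
    indexed by the same d-element index set (here basis V). *)
Definition omega (V V' : {fset nat}) (bV : basis V -> basis V -> C)
    (bV' : basis V -> basis V' -> C) (s : basis (V `|` V')%fset) : C :=
  (sqrtC ((2 ^ #|` V|)%N%:R))^-1 *
    \sum_(i : basis V) bV i (restr V s) * bV' i (restr V' s).

Definition Omega (V V' : {fset nat}) (bV : basis V -> basis V -> C)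
    (bV' : basis V -> basis V' -> C) : op (V `|` V')%fset :=
  fun s t => omega bV bV' s * (omega bV bV' t)^*.

(* Main.v *)
Require Import Defs.
From HB Require Import structures.
From mathcomp Require Import all_boot all_order all_algebra finmap spectral.
From Stdlib Require Import FunctionalExtensionality.
From mathcomp Require Import ring.
Import Order.TTheory GRing.Theory Num.Theory.
Set Implicit Arguments.
Unset Strict Implicit.
Unset Printing Implicit Defensive.
Local Open Scope ring_scope.

Definition mk (X A B : {fset nat}) (a : basis A) (b : basis B) : basis X :=
  [ffun x : X => if (insub (val x) : option A) is Some y then a y
                 else if (insub (val x) : option B) is Some y then b y else false].

Arguments mk : clear implicits.

Lemma insub_in (A : {fset nat}) (n : nat) (h : n \in A) :
  exists y : A, (insub n : option A) = Some y /\ val y = n.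
Proof. rewrite insubT; eexists; split; reflexivity. Qed.

Lemma restr_mkA X A B a b : (A `<=` X)%fset -> restr A (mk X A B a b) = a.
Proof.
move=> /fsubsetP sAX; apply/ffunP => y; rewrite !ffunE.
have [x [-> vx]] := insub_in (sAX _ (valP y)).
rewrite ffunE vx valK //.
Qed.

Lemma restr_mkB X A B a b : (B `<=` X)%fset -> (A `&` B = fset0)%fset ->
  restr B (mk X A B a b) = b.
Proof.
move=> /fsubsetP sBX dAB; apply/ffunP => y; rewrite !ffunE.
have [x [-> vx]] := insub_in (sBX _ (valP y)).
rewrite ffunE vx valK insubN //.
apply/negP => yA.
have : val y \in (A `&` B)%fset by rewrite in_fsetI yA (valP y).
by rewrite dAB in_fset0.
Qed.

Lemma mk_restr X A B s : (X `<=` A `|` B)%fset ->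
  mk X A B (restr A s) (restr B s) = s.
Proof.
move=> /fsubsetP sX; apply/ffunP => x; rewrite !ffunE.
case: insubP => [y _ vy|nA].
  by rewrite ffunE vy valK.
case: insubP => [y _ vy|nB].
  by rewrite ffunE vy valK.
have := sX _ (valP x); by rewrite in_fsetU (negbTE nA) (negbTE nB).
Qed.

Lemma glue_mk V X B u p r : glue u (mk X V B p r) = mk X V B u r.
Proof.
apply/ffunP => x; rewrite !ffunE.
by case: insubP => [y _ vy|nA]; rewrite ?ffunE //; rewrite insubN.
Qed.

Lemma restr_glue V X u s : (V `<=` X)%fset -> restr V (glue (X:=X) u s) = u.
Proof.
move=> /fsubsetP sVX; apply/ffunP => y; rewrite !ffunE.
have [x [-> vx]] := insub_in (sVX _ (valP y)).
by rewrite ffunE vx valK.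
Qed.

Lemma glue_restr (V X : {fset nat}) s : glue (restr V s) s = s :> basis X.
Proof.
apply/ffunP => x; rewrite !ffunE.
case: insubP => [y _ vy|//]; by rewrite ffunE vy valK.
Qed.

Lemma glue_glue (V X : {fset nat}) (u u' : basis V) s : glue u (glue u' s) = glue u s :> basis X.
Proof.
apply/ffunP => x; rewrite !ffunE.
by case: insubP => [y _ vy|nA]; rewrite ?ffunE // insubN.
Qed.

Lemma restr_restr V U X (s : basis X) : (V `<=` U)%fset ->
  restr V (restr U s) = restr V s.
Proof.
move=> /fsubsetP sVU; apply/ffunP => y; rewrite !ffunE.
have [x [-> vx]] := insub_in (sVU _ (valP y)).
rewrite ffunE vx.
by case: insubP.
Qed.

Lemma restr_glue_sub (V U X : {fset nat}) (u : basis V) (s : basis X) : (V `<=` U)%fset -> (U `<=` X)%fset ->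
  restr U (glue u s) = glue u (restr U s).
Proof.
move=> /fsubsetP sVU /fsubsetP sUX; apply/ffunP => y; rewrite !ffunE.
have [x [-> vx]] := insub_in (sUX _ (valP y)).
rewrite ffunE vx.
by case: insubP => [v _ vv|nV] //; rewrite ffunE vx.
Qed.

Lemma restr_id X (s : basis X) : restr X s = s.
Proof. by apply/ffunP => x; rewrite ffunE valK. Qed.

Lemma sum_reindex (I J : finType) (h : J -> I) (F : I -> C) :
  bijective h -> \sum_(i : I) F i = \sum_(j : J) F (h j).
Proof. move=> bh; exact: (reindex h (onW_bij _ bh)). Qed.

Lemma sum_delta (I : finType) (i : I) (F : I -> C) : \sum_(k : I) (k == i)%:R * F k = F i.
Proof.
rewrite (bigD1 i) //= (@big1 C 0 +%R) ?eqxx ?mul1r ?addr0 // => k /negbTE ->.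
by rewrite mul0r.
Qed.
Lemma sum_delta' (I : finType) (i : I) (F : I -> C) : \sum_(k : I) F k * (i == k)%:R = F i.
Proof.
rewrite (bigD1 i) //= (@big1 C 0 +%R) ?eqxx ?mulr1 ?addr0 // => k.
by rewrite eq_sym => /negbTE ->; rewrite mulr0.
Qed.

Lemma sum_split (X A B : {fset nat}) (f : basis X -> C) :
  (A `<=` X)%fset -> (B `<=` X)%fset -> (A `&` B = fset0)%fset ->
  (X `<=` A `|` B)%fset ->
  \sum_(s : basis X) f s = \sum_(a : basis A) \sum_(b : basis B) f (mk X A B a b).
Proof.
move=> sA sB dAB sX.
rewrite pair_big /= (@sum_reindex _ _ (fun p : basis A * basis B => mk X A B p.1 p.2) f) //.
exists (fun s => (restr A s, restr B s)) => [[a b]|s] /=.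
  by rewrite restr_mkA // restr_mkB.
by rewrite mk_restr.
Qed.

Lemma sum_glue_inv V X (f : basis X -> basis V -> C) : (V `<=` X)%fset ->
  \sum_(s : basis X) \sum_(u : basis V) f s u =
  \sum_(s : basis X) \sum_(u : basis V) f (glue u s) (restr V s).
Proof.
move=> sVX; rewrite !pair_big /=.
rewrite (@sum_reindex _ _ (fun p : basis X * basis V => (glue p.2 p.1, restr V p.1)) (fun p => f p.1 p.2)) //=.
exists (fun p : basis X * basis V => (glue p.2 p.1, restr V p.1)) => [[s u]|[s u]] /=;
  by rewrite glue_glue glue_restr restr_glue.
Qed.

Section Lin.
Variables (V : {fset nat}) (E : super V).
Hypothesis linE : linear_super E.

Lemma lin0 u v : E (fun _ _ => 0) u v = 0.
Proof.
have := linE 1 (fun _ _ => 0) (fun _ _ => 0) u v.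
have -> : (fun i j : basis V => 1 * (0:C) + 0) = (fun _ _ => 0).
  by apply: functional_extensionality => i; apply: functional_extensionality => j; rewrite mulr0 addr0.
rewrite mul1r => h; apply: (@addrI _ (E (fun _ _ => 0) u v)).
by rewrite addr0 -h.
Qed.

Lemma lin_sum (I : Type) (r : seq I) (a : I -> C) (A : I -> op V) u v :
  E (fun i j => \sum_(k <- r) a k * A k i j) u v = \sum_(k <- r) a k * E (A k) u v.
Proof.
elim: r => [|k r IH].
  rewrite big_nil -[RHS](lin0 u v); congr (E _ u v).
  by apply: functional_extensionality => i; apply: functional_extensionality => j; rewrite big_nil.
rewrite big_cons -IH -linE; congr (E _ u v).
by apply: functional_extensionality => i; apply: functional_extensionality => j; rewrite big_cons.
Qed.

Lemma op_expand (A : op V) :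
  A = fun i j => \sum_(p : basis V * basis V) A p.1 p.2 * opunit p.1 p.2 i j.
Proof.
apply: functional_extensionality => i; apply: functional_extensionality => j.
rewrite -(@pair_bigA C 0 +%R _ _ (fun p q => A p q * opunit p q i j)) /= /opunit.
rewrite -[LHS](sum_delta' i (fun p => A p j)); apply: eq_bigr => p _.
rewrite -(sum_delta' j (fun q => A p q)) mulr_suml; apply: eq_bigr => q _.
by rewrite -mulrA -natrM mulnb andbC.
Qed.

Lemma lin_expand (A : op V) u v :
  E A u v = \sum_(p : basis V) \sum_(q : basis V) A p q * E (opunit p q) u v.
Proof.
rewrite {1}(op_expand A) lin_sum -(@pair_bigA C 0 +%R _ _ (fun p q => A p q * E (opunit p q) u v)) /=.
by apply: eq_bigr.
Qed.

Lemma ext_expand (X : {fset nat}) (rho : op X) s t :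
  ext E rho s t = \sum_(u : basis V) \sum_(v : basis V)
     rho (glue u s) (glue v t) * E (opunit u v) (restr V s) (restr V t).
Proof. by rewrite /ext lin_expand. Qed.

End Lin.

Lemma glue_out (V X : {fset nat}) (u : basis V) (s : basis X) (x : X) :
  val x \notin V -> glue u s x = s x.
Proof. by move=> nV; rewrite ffunE insubN. Qed.

Definition agree (U X : {fset nat}) (s t : basis X) :=
  [forall x : X, (val x \notin U) ==> (s x == t x)].

Lemma agree_glue (V U X : {fset nat}) (u v : basis V) (s t : basis X) :
  (V `<=` U)%fset -> agree U (glue u s) (glue v t) = agree U s t.
Proof.
move=> /fsubsetP sVU; apply: eq_forallb => x.
case: (boolP (val x \in U)) => //= xU.
have xV : val x \notin V by apply: contra xU; apply: sVU.
by rewrite !glue_out.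
Qed.

Lemma sum4_inv (V X : {fset nat}) (f : basis X -> basis X -> basis V -> basis V -> C) :
  (V `<=` X)%fset ->
  \sum_(s : basis X) \sum_(t : basis X) \sum_(u : basis V) \sum_(v : basis V) f s t u v =
  \sum_(s : basis X) \sum_(t : basis X) \sum_(u : basis V) \sum_(v : basis V) f (glue v s) (glue u t) (restr V t) (restr V s).
Proof.
move=> sVX.
transitivity (\sum_(s : basis X) \sum_(t : basis X) \sum_(u : basis V) \sum_(v : basis V) f s (glue u t) (restr V t) v).
  apply: eq_bigr => s _.
  exact: (@sum_glue_inv V X (fun t u => \sum_(v : basis V) f s t u v)).
transitivity (\sum_(s : basis X) \sum_(v : basis V) \sum_(t : basis X) \sum_(u : basis V) f s (glue u t) (restr V t) v).
  apply: eq_bigr => s _.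
  under eq_bigr => t _ do rewrite exchange_big.
  exact: exchange_big.
rewrite (@sum_glue_inv V X (fun s v => \sum_(t : basis X) \sum_(u : basis V) f s (glue u t) (restr V t) v)) //.
apply: eq_bigr => s _.
rewrite exchange_big; apply: eq_bigr => t _.
exact: exchange_big.
Qed.

Lemma trE (X : {fset nat}) (A B : op X) :
  optr (opmul A B) = \sum_i \sum_k A i k * B k i.
Proof. by []. Qed.

Lemma extopE (W X : {fset nat}) (M : op W) s t :
  @extop W X M s t = M (restr W s) (restr W t) * (agree W s t)%:R.
Proof. by []. Qed.

Lemma mulr_sumr2 (I J : finType) (x : C) (f : I -> J -> C) :
  x * \sum_(i : I) \sum_(j : J) f i j = \sum_(i : I) \sum_(j : J) x * f i j.
Proof. rewrite mulr_sumr; apply: eq_bigr => i _; exact: mulr_sumr. Qed.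

Lemma mulr_suml2 (I J : finType) (x : C) (f : I -> J -> C) :
  (\sum_(i : I) \sum_(j : J) f i j) * x = \sum_(i : I) \sum_(j : J) f i j * x.
Proof. rewrite mulr_suml; apply: eq_bigr => i _; exact: mulr_suml. Qed.

Lemma dual (V U X : {fset nat}) (E : super V) (Z : op U) (rho : op X) :
  linear_super E -> (V `<=` U)%fset -> (U `<=` X)%fset ->
  optr (opmul (@extop U X (ext (adjoint E) Z)) rho) =
  optr (opmul (@extop U X Z) (ext E rho)).
Proof.
move=> linE sVU sUX.
have sVX : (V `<=` X)%fset by apply: fsubset_trans sUX.
rewrite !trE.
under [RHS]eq_bigr => s _ do under eq_bigr => t _ do rewrite (ext_expand linE) mulr_sumr2.
rewrite [RHS](sum4_inv _ sVX).
apply: eq_bigr => s _; apply: eq_bigr => t _.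
rewrite extopE /ext /adjoint trE -mulrA mulr_suml2.
apply: eq_bigr => u _; apply: eq_bigr => v _.
rewrite extopE agree_glue // !glue_glue !glue_restr !restr_glue //.
rewrite !(restr_glue_sub _ _ sVU sUX) !(restr_restr _ sVU).
ring.
Qed.

Section Alg.
Variable K : numClosedFieldType.

Lemma sum_deltaK (I : finType) (i : I) (F : I -> K) : \sum_(k : I) (k == i)%:R * F k = F i.
Proof.
rewrite (bigD1 i) //= big1 ?eqxx ?mul1r ?addr0 // => k /negbTE ->.
by rewrite mul0r.
Qed.
Definition qf (I : finType) (A : I -> I -> K) (x : I -> K) : K :=
  \sum_i \sum_j (x i)^* * A i j * x j.

Definition psdI (I : finType) (A : I -> I -> K) := forall x, 0 <= qf A x.

Lemma sum_deltaR (I : finType) (i : I) (a : K) (F : I -> K) :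
  \sum_(k : I) F k * (a * (k == i)%:R) = F i * a.
Proof.
rewrite -[RHS](sum_deltaK i (fun k => F k * a)); apply: eq_bigr => k _; ring.
Qed.

Lemma qf2 (I : finType) (A : I -> I -> K) i j (a b : K) :
  qf A (fun k => a * (k == i)%:R + b * (k == j)%:R) =
  a^* * a * A i i + a^* * b * A i j + b^* * a * A j i + b^* * b * A j j.
Proof.
rewrite /qf.
transitivity (\sum_k (a^* * (k == i)%:R + b^* * (k == j)%:R) * (A k i * a + A k j * b)).
  apply: eq_bigr => k _.
  rewrite rmorphD !rmorphM /= !conjC_nat.
  under eq_bigr => l _ do rewrite -mulrA mulrDr.
  rewrite -mulr_sumr big_split /= !sum_deltaR; ring.
under eq_bigr => k _ do rewrite mulrDl.
rewrite big_split /=.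
under eq_bigr => k _ do rewrite mulrC.
under [X in _ + X]eq_bigr => k _ do rewrite mulrC.
rewrite !sum_deltaR; ring.
Qed.

Lemma realE' (z : K) : 0 <= z -> z^* = z.
Proof. by move=> /ger0_real /conj_Creal. Qed.

Lemma psd_herm (I : finType) (A : I -> I -> K) : psdI A ->
  forall i j, A j i = (A i j)^*.
Proof.
move=> hA i j.
have r2 : forall a b : K, (a^* * a * A i i + a^* * b * A i j + b^* * a * A j i + b^* * b * A j j)^* =
                          a^* * a * A i i + a^* * b * A i j + b^* * a * A j i + b^* * b * A j j.
  by move=> a b; rewrite -qf2; apply: realE'; apply: hA.
have c1 : (1:K)^* = 1 := rmorph1 _.
have c0 : (0:K)^* = 0 := rmorph0 _.
have jj : 'i * 'i = -1 :> K by rewrite -expr2 sqrCi.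
have rii : (A i i)^* = A i i.
  have := r2 1 0; rewrite c1 c0.
  have -> : 1 * 1 * A i i + 1 * 0 * A i j + 0 * 1 * A j i + 0 * 0 * A j j = A i i by ring.
  done.
have rjj : (A j j)^* = A j j.
  have := r2 0 1; rewrite c1 c0.
  have -> : 0 * 0 * A i i + 0 * 1 * A i j + 1 * 0 * A j i + 1 * 1 * A j j = A j j by ring.
  done.
set a := A i j; set b := A j i.
have E1 : a^* + b^* - (a + b) = 0.
  have := r2 1 1; rewrite c1.
  have -> : 1 * 1 * A i i + 1 * 1 * a + 1 * 1 * b + 1 * 1 * A j j = A i i + a + b + A j j by ring.
  rewrite !rmorphD /= rii rjj => h.
  apply/eqP; rewrite subr_eq0; apply/eqP.
  apply: (@addrI _ (A i i)); apply: (@addIr _ (A j j)).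
  by rewrite !addrA h.
have E2 : - 'i * a^* + 'i * b^* - ('i * a - 'i * b) = 0.
  have := r2 1 'i; rewrite c1 conjCi.
  have -> : 1 * 1 * A i i + 1 * 'i * a + - 'i * 1 * b + - 'i * 'i * A j j = A i i + ('i * a - 'i * b) + A j j.
    rewrite [- 'i * 'i]mulNr jj; ring.
  rewrite !(rmorphD, rmorphN, rmorphM) /= conjCi rii rjj => h.
  apply/eqP; rewrite subr_eq0; apply/eqP.
  apply: (@addrI _ (A i i)); apply: (@addIr _ (A j j)).
  by rewrite -h; ring.
have H2 : (a^* - b) * 2 = (a^* + b^* - (a + b)) + 'i * (- 'i * a^* + 'i * b^* - ('i * a - 'i * b))
   + ('i * 'i + 1) * (a^* - b^* + a - b) by ring.
rewrite E1 E2 jj addNr !mul0r !addr0 in H2.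
apply/esym/eqP; rewrite -subr_eq0; apply/eqP.
rewrite mulr0 addr0 in H2.
by move/eqP: H2; rewrite mulf_eq0 pnatr_eq0 orbF => /eqP.
Qed.

Lemma aux_conj_sum (I : finType) (a e : K) (F G : I -> K) :
  (forall r, F r = (G r)^* * e) -> a * \sum_r F r = a * (\sum_r G r)^* * e.
Proof.
move=> h; rewrite -mulrA rmorph_sum /= mulr_suml; congr (_ * _).
by apply: eq_bigr => r _.
Qed.

Lemma conjM_conj (x y e : K) : x^* * y * e = (x * y^*)^* * e.
Proof. by rewrite rmorphM /= conjCK. Qed.

Lemma sum_enum (I : finType) (g : 'I_#|I| -> K) :
  \sum_(a : I) g (enum_rank a) = \sum_(i : 'I_#|I|) g i.
Proof. by rewrite [RHS](reindex enum_rank) //; apply: onW_bij; apply: enum_rank_bij. Qed.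

Lemma sum3_swap (I J L : finType) (f : I -> J -> L -> K) :
  \sum_(i : I) \sum_(j : J) \sum_(l : L) f i j l = \sum_(l : L) \sum_(i : I) \sum_(j : J) f i j l.
Proof.
under eq_bigr => i _ do rewrite exchange_big.
by rewrite exchange_big.
Qed.

Local Open Scope sesquilinear_scope.

Lemma gram (I : finType) (A : I -> I -> K) : psdI A ->
  exists w : 'I_#|I| -> I -> K, forall i j, A i j = \sum_k (w k i)^* * w k j.
Proof.
move=> hA; have hh := psd_herm hA.
pose M : 'M[K]_#|I| := \matrix_(i, j) A (enum_val i) (enum_val j).
have hM : M^t* = M.
  by apply/matrixP => i j; rewrite !mxE -hh.
have nM : M \is normalmx by apply/normalmxP; rewrite hM.
have /orthomx_spectralP eM := nM.
set P := spectralmx M in eM; set D := spectral_diag M in eM.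
have uP : P \is unitarymx := spectral_unitarymx M.
rewrite invmx_unitary // in eM.
have entry : forall i j, M i j = \sum_k (P k i)^* * D 0 k * P k j.
  move=> i j; rewrite {1}eM mxE; apply: eq_bigr => k _.
  by rewrite mul_mx_diag !mxE.
have urows : forall k l, \sum_i P k i * (P l i)^* = (k == l)%:R.
  move=> k l; move/unitarymxP: uP => /matrixP /(_ k l); rewrite !mxE => <-.
  by apply: eq_bigr => i _; rewrite !mxE.
have AM : forall a b, A a b = M (enum_rank a) (enum_rank b).
  by move=> a b; rewrite mxE !enum_rankK.
have Dge0 : forall k, 0 <= D 0 k.
  move=> k; have := hA (fun a => (P k (enum_rank a))^*).
  rewrite /qf.
  under eq_bigr => a _ do under eq_bigr => b _ do rewrite conjCK AM.
  rewrite (sum_enum (fun i => \sum_b P k i * M i (enum_rank b) * (P k (enum_rank b))^*)).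
  under eq_bigr => i _ do rewrite (sum_enum (fun j => P k i * M i j * (P k j)^*)).
  suff -> : \sum_i \sum_j P k i * M i j * (P k j)^* = D 0 k by [].
  transitivity (\sum_i \sum_j \sum_l (P k i * (P l i)^*) * D 0 l * (P l j * (P k j)^*)).
    apply: eq_bigr => i _; apply: eq_bigr => j _.
    rewrite entry mulr_sumr mulr_suml; apply: eq_bigr => l _; ring.
  rewrite sum3_swap.
  transitivity (\sum_l (k == l)%:R * D 0 l * (l == k)%:R).
    apply: eq_bigr => l _.
    rewrite -(urows k l) -(urows l k) mulr_suml mulr_suml; apply: eq_bigr => i _.
    rewrite mulr_sumr; apply: eq_bigr => j _; ring.
  rewrite (bigD1 k) //= eqxx mul1r mulr1.
  rewrite big1 ?addr0 // => l /negbTE nl.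
  by rewrite nl mulr0n mulr0.
exists (fun k a => sqrtC (D 0 k) * P k (enum_rank a)) => a b.
rewrite AM entry; apply: eq_bigr => k _.
rewrite rmorphM /= (conj_Creal (sqrtC_real (Dge0 k))).
set sq := sqrtC (D 0 k).
have hs : sq * sq = D 0 k by rewrite -expr2 sqrtCK.
rewrite -hs; ring.
Qed.

Lemma tp (I : finType) (A B : I -> I -> K) : psdI A -> psdI B ->
  0 <= \sum_i \sum_k A i k * B k i.
Proof.
move=> hA hB; have [w hw] := gram hA.
suff -> : \sum_i \sum_k A i k * B k i = \sum_m qf B (fun t => (w m t)^*).
  by apply: sumr_ge0 => m _; apply: hB.
rewrite /qf.
transitivity (\sum_i \sum_k \sum_m (w m i)^* * w m k * B k i).
  apply: eq_bigr => i _; apply: eq_bigr => k _; rewrite hw mulr_suml.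
  by apply: eq_bigr.
rewrite sum3_swap; apply: eq_bigr => m _.
rewrite exchange_big; apply: eq_bigr => k _; apply: eq_bigr => i _.
rewrite conjCK; ring.
Qed.
End Alg.

Lemma exch (I J : finType) (f : I -> J -> C) :
  \sum_(i : I) \sum_(j : J) f i j = \sum_(j : J) \sum_(i : I) f i j.
Proof. exact: exchange_big. Qed.

Definition Qf (V : {fset nat}) (E : super V) (c : basis V -> basis V -> C) : C :=
  \sum_(u : basis V) \sum_(p : basis V) \sum_(v : basis V) \sum_(q : basis V)
    c u p * (c v q)^* * E (opunit u v) p q.

Definition cmk (X V B : {fset nat}) (z w : basis X -> C) (u p : basis V) : C :=
  \sum_(r : basis B) z (mk X V B p r) * (w (mk X V B u r))^*.

Arguments cmk : clear implicits.

Section MF.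
Variables (V X B : {fset nat}) (E : super V).
Hypotheses (linE : linear_super E) (sVX : (V `<=` X)%fset) (sBX : (B `<=` X)%fset)
  (dVB : (V `&` B = fset0)%fset) (cX : (X `<=` V `|` B)%fset).

Lemma MF (z w : basis X -> C) :
  \sum_i \sum_k (z i)^* * z k * ext E (fun a b => (w a)^* * w b) k i =
  Qf E (cmk X V B z w).
Proof.
set c := cmk _ _ _ _ _.
pose H (u p : basis V) := \sum_(i : basis X) \sum_(v : basis V)
   (z i)^* * w (glue v i) * E (opunit u v) p (restr V i).
transitivity (\sum_(k : basis X) \sum_(u : basis V)
   (z k * (w (glue u k))^*) * H u (restr V k)).
  rewrite exch; apply: eq_bigr => k _.
  under eq_bigr => i _ do rewrite (ext_expand linE) mulr_sumr2.
  rewrite exch; apply: eq_bigr => u _.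
  rewrite /H mulr_sumr2; apply: eq_bigr => i _; apply: eq_bigr => v _; ring.
transitivity (\sum_(u : basis V) \sum_(p : basis V) c u p * H u p).
  rewrite (sum_split (fun k => \sum_(u : basis V) z k * (w (glue u k))^* * H u (restr V k)) sVX sBX dVB cX).
  under eq_bigr => p _ do rewrite exch.
  rewrite exch; apply: eq_bigr => u _; apply: eq_bigr => p _.
  rewrite /c mulr_suml; apply: eq_bigr => r _.
  by rewrite glue_mk restr_mkA.
rewrite /Qf; apply: eq_bigr => u _; apply: eq_bigr => p _.
rewrite /H.
rewrite (sum_split (fun i => \sum_(v : basis V) (z i)^* * w (glue v i) * E (opunit u v) p (restr V i)) sVX sBX dVB cX).
under eq_bigr => q _ do rewrite exch.
rewrite exch mulr_sumr2; apply: eq_bigr => v _; apply: eq_bigr => q _.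
apply: (aux_conj_sum (K:=C)) => r.
rewrite glue_mk restr_mkA //; exact: (conjM_conj (K:=C)).
Qed.

End MF.

Lemma ext_sum (V X : {fset nat}) (G : super V) (I : finType) (f : I -> op X) :
  linear_super G -> forall k i,
  ext G (fun a b => \sum_(l : I) f l a b) k i = \sum_(l : I) ext G (f l) k i.
Proof.
move=> linG k i; rewrite (ext_expand linG).
under eq_bigr => u _ do under eq_bigr => v _ do rewrite mulr_suml.
rewrite (sum3_swap (K:=C)); apply: eq_bigr => l _.
by rewrite (ext_expand linG).
Qed.

Lemma sum4_swap (I J L M : finType) (f : I -> J -> L -> M -> C) :
  \sum_(i : I) \sum_(j : J) \sum_(l : L) \sum_(m : M) f i j l m =
  \sum_(l : L) \sum_(m : M) \sum_(i : I) \sum_(j : J) f i j l m.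
Proof.
rewrite (sum3_swap (K:=C) (fun i j l => \sum_(m : M) f i j l m)).
apply: eq_bigr => l _.
exact: (sum3_swap (K:=C)).
Qed.

Definition compl (X V : {fset nat}) := (X `\` V)%fset.

Lemma compl_props (X V : {fset nat}) : (V `<=` X)%fset ->
  [/\ (compl X V `<=` X)%fset, (V `&` compl X V = fset0)%fset & (X `<=` V `|` compl X V)%fset].
Proof.
move=> sVX; split.
- exact: fsubsetDl.
- apply/eqP; rewrite -fsubset0; apply/fsubsetP => x.
  by rewrite in_fsetI in_fsetD => /andP[-> /andP[]].
- apply/fsubsetP => x xX; rewrite in_fsetU in_fsetD xX andbT.
  by case: (x \in V).
Qed.

Lemma tr_decomp (V X B : {fset nat}) (G : super V) n1 n2
   (zz : 'I_n1 -> basis X -> C) (ww : 'I_n2 -> basis X -> C) (N rho : op X) :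
  linear_super G -> (V `<=` X)%fset -> (B `<=` X)%fset ->
  (V `&` B = fset0)%fset -> (X `<=` V `|` B)%fset ->
  (forall i k, N i k = \sum_m (zz m i)^* * zz m k) ->
  (forall a b, rho a b = \sum_l (ww l a)^* * ww l b) ->
  optr (opmul N (ext G rho)) = \sum_m \sum_l Qf G (cmk X V B (zz m) (ww l)).
Proof.
move=> linG sVX sBX dVB cX hN hr.
have -> : rho = (fun a b => \sum_l (ww l a)^* * ww l b).
  by apply: functional_extensionality => a; apply: functional_extensionality => b.
rewrite trE.
transitivity (\sum_(i : basis X) \sum_(k : basis X) \sum_m \sum_l
   (zz m i)^* * zz m k * ext G (fun a b => (ww l a)^* * ww l b) k i).
  apply: eq_bigr => i _; apply: eq_bigr => k _.
  rewrite hN (ext_sum (fun l a b => (ww l a)^* * ww l b) linG) mulr_suml.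
  apply: eq_bigr => m _; exact: mulr_sumr.
rewrite sum4_swap; apply: eq_bigr => m _; apply: eq_bigr => l _.
exact: MF.
Qed.

Lemma key (V X : {fset nat}) (E F : super V) :
  linear_super E -> linear_super F -> (V `<=` X)%fset ->
  (forall c, Qf E c <= Qf F c) ->
  forall N rho : op X, psd N -> psd rho ->
  optr (opmul N (ext E rho)) <= optr (opmul N (ext F rho)).
Proof.
move=> linE linF sVX hQ N rho hN hr.
have [sBX dVB cX] := compl_props sVX.
have [zz hz] := gram (K:=C) hN.
have [ww hw] := gram (K:=C) hr.
rewrite (tr_decomp linE sVX sBX dVB cX hz hw) (tr_decomp linF sVX sBX dVB cX hz hw).
apply: ler_sum => m _; apply: ler_sum => l _; exact: hQ.
Qed.

Section Alg2.
Variable K : numClosedFieldType.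

Lemma sum_deltaK' (I : finType) (i : I) (F : I -> K) : \sum_(k : I) F k * (i == k)%:R = F i.
Proof.
rewrite (bigD1 i) //= big1 ?eqxx ?mulr1 ?addr0 // => k.
by rewrite eq_sym => /negbTE ->; rewrite mulr0.
Qed.

Lemma sum_enum_val (I : finType) (g : I -> K) :
  \sum_(x : 'I_#|I|) g (enum_val x) = \sum_(s : I) g s.
Proof.
rewrite -(sum_enum (fun x => g (enum_val x))); apply: eq_bigr => s _; by rewrite enum_rankK.
Qed.

Lemma col_orth (I : finType) (b : I -> I -> K) :
  (forall i j, \sum_s (b i s)^* * b j s = (i == j)%:R) ->
  forall p q, \sum_i (b i p)^* * b i q = (p == q)%:R.
Proof.
move=> hb p q.
pose A : 'M[K]_#|I| := \matrix_(i, s) (b (enum_val i) (enum_val s))^*.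
pose Bm : 'M[K]_#|I| := \matrix_(s, j) b (enum_val j) (enum_val s).
have AB : A *m Bm = 1%:M.
  apply/matrixP => i j; rewrite !mxE.
  rewrite (eq_bigr (fun s => (b (enum_val i) (enum_val s))^* * b (enum_val j) (enum_val s))); last first.
    by move=> s _; rewrite !mxE.
  rewrite (sum_enum_val (fun s => (b (enum_val i) s)^* * b (enum_val j) s)) hb.
  by rewrite (inj_eq enum_val_inj).
have /matrixP /(_ (enum_rank q) (enum_rank p)) := mulmx1C AB.
rewrite !mxE (inj_eq enum_rank_inj) eq_sym.
rewrite (eq_bigr (fun i => b (enum_val i) q * (b (enum_val i) p)^*)); last first.
  by move=> i _; rewrite !mxE !enum_rankK.
rewrite (sum_enum_val (fun i => b i q * (b i p)^*)) => <-.
by apply: eq_bigr => i _; rewrite mulrC.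
Qed.

Lemma surj_calc (I J : finType) (bV : I -> I -> K) (bV' : I -> J -> K)
    (c : I -> I -> K) (ka sd : K) u p :
  ka^* * sd = 1 ->
  (forall i j, \sum_r (bV' i r)^* * bV' j r = (i == j)%:R) ->
  (forall p q, \sum_i (bV i p)^* * bV i q = (p == q)%:R) ->
  \sum_(r : J) (ka * \sum_(i : I) bV i p * bV' i r)^* *
      (sd * \sum_(j : I) (\sum_(p' : I) bV j p' * c u p') * bV' j r) = c u p.
Proof.
move=> hks o' oc.
pose a j := \sum_(p' : I) bV j p' * c u p'.
transitivity (\sum_(r : J) \sum_(i : I) \sum_(j : I)
   ka^* * sd * ((bV i p)^* * a j) * ((bV' i r)^* * bV' j r)).
  apply: eq_bigr => r _.
  rewrite rmorphM rmorph_sum /= mulr_sumr mulr_suml; apply: eq_bigr => i _.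
  rewrite mulr_sumr mulr_sumr; apply: eq_bigr => j _; rewrite rmorphM /= /a; ring.
rewrite -(sum3_swap (fun i j r => ka^* * sd * ((bV i p)^* * a j) * ((bV' i r)^* * bV' j r))).
transitivity (\sum_(i : I) (bV i p)^* * a i).
  apply: eq_bigr => i _.
  transitivity (\sum_(j : I) ka^* * sd * ((bV i p)^* * a j) * (i == j)%:R).
    by apply: eq_bigr => j _; rewrite -o' mulr_sumr.
  by rewrite sum_deltaK' hks mul1r.
rewrite /a.
transitivity (\sum_(i : I) \sum_(p' : I) c u p' * ((bV i p)^* * bV i p')).
  apply: eq_bigr => i _; rewrite mulr_sumr; apply: eq_bigr => p' _; ring.
rewrite exchange_big /=.
transitivity (\sum_(p' : I) c u p' * (p == p')%:R).
  by apply: eq_bigr => p' _; rewrite -mulr_sumr oc.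
exact: sum_deltaK'.
Qed.

Lemma psd_rank1 (I : finType) (w : I -> K) : psdI (fun a b => (w a)^* * w b).
Proof.
move=> x; rewrite /qf.
have -> : \sum_i \sum_j (x i)^* * ((w i)^* * w j) * x j =
   (\sum_j w j * x j) * (\sum_i w i * x i)^*.
  rewrite rmorph_sum /= mulr_sumr; apply: eq_bigr => i _.
  rewrite mulr_suml; apply: eq_bigr => j _; rewrite rmorphM /=; ring.
exact: mul_conjC_ge0.
Qed.

Lemma psd_scale (I : finType) (A : I -> I -> K) (t : K) : 0 <= t -> psdI A ->
  psdI (fun a b => t * A a b).
Proof.
move=> t0 hA x; rewrite /qf.
have -> : \sum_i \sum_j (x i)^* * (t * A i j) * x j = t * qf A x.
  rewrite /qf mulr_sumr; apply: eq_bigr => i _; rewrite mulr_sumr; apply: eq_bigr => j _; ring.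
by apply: mulr_ge0.
Qed.

End Alg2.

Lemma scale_aux (K : numClosedFieldType) (s a b e : K) :
  s * a * (s * b)^* * e = s * s^* * (a * b^* * e).
Proof. rewrite rmorphM /=; ring. Qed.

Lemma scale_aux2 (K : numClosedFieldType) (s x : K) :
  (s * x)^* * (s * x) = s * s^* * (x^* * x).
Proof. rewrite rmorphM /=; ring. Qed.

Lemma scale_aux3 (K : numClosedFieldType) (s z x : K) : s^* = s ->
  z * (s * x)^* = s * (z * x^*).
Proof. move=> sr; rewrite rmorphM /= sr; ring. Qed.

Lemma aux_tT (K : numClosedFieldType) (t T : K) : t * (1 + T) = 1 -> t * T = 1 - t.
Proof. move=> h; rewrite -h; ring. Qed.

Lemma aux_le (K : numClosedFieldType) (t : K) : 0 <= t -> 1 - t <= 1.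
Proof. by move=> h; rewrite gerBl. Qed.

Lemma Qf_scale (V : {fset nat}) (E : super V) (c : basis V -> basis V -> C) (s : C) :
  Qf E (fun u p => s * c u p) = s * s^* * Qf E c.
Proof.
rewrite /Qf mulr_sumr; apply: eq_bigr => u _; rewrite mulr_sumr; apply: eq_bigr => p _.
rewrite mulr_sumr; apply: eq_bigr => v _; rewrite mulr_sumr; apply: eq_bigr => q _.
exact: (scale_aux (K:=C)).
Qed.

Section Choi.
Variables (V V' : {fset nat}) (bV : basis V -> basis V -> C) (bV' : basis V -> basis V' -> C).
Hypotheses (dVV : (V `&` V' = fset0)%fset) (obV : orthonormal_basis bV)
  (obV' : orthonormal_basis bV').

Definition sdV := sqrtC ((2 ^ #|` V|)%N%:R : C).

Lemma sdV_facts : [/\ sdV != 0, sdV^* = sdV & 0 < sdV].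
Proof.
have d0 : (0 : C) < (2 ^ #|` V|)%N%:R by rewrite ltr0n expn_gt0.
have s0 : 0 < sdV by rewrite /sdV sqrtC_gt0.
split => //; first by rewrite gt_eqF.
exact: conj_Creal (sqrtC_real (ltW d0)).
Qed.

Lemma omega_mk p r :
  omega bV bV' (mk (V `|` V')%fset V V' p r) = sdV^-1 * \sum_i bV i p * bV' i r.
Proof. by rewrite /omega restr_mkA ?fsubsetUl // restr_mkB ?fsubsetUr. Qed.

Definition zo (s : basis (V `|` V')%fset) := (omega bV bV' s)^*.

Lemma trOmega (P : op (V `|` V')%fset) :
  optr (opmul (Omega bV bV') P) = \sum_i \sum_k (zo i)^* * zo k * P k i.
Proof.
rewrite trE; apply: eq_bigr => i _; apply: eq_bigr => k _.
by rewrite /Omega /zo conjCK.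
Qed.

Lemma choi_from (E1 E2 : super V) : linear_super E1 -> linear_super E2 ->
  (forall rho : op (V `|` V')%fset, pdo rho ->
     optr (opmul (Omega bV bV') (ext E1 rho)) <= optr (opmul (Omega bV bV') (ext E2 rho))) ->
  forall c, Qf E1 c <= Qf E2 c.
Proof.
move=> l1 l2 H c.
have sVU : (V `<=` V `|` V')%fset := fsubsetUl V V'.
have sV'U : (V' `<=` V `|` V')%fset := fsubsetUr V V'.
have cU : ((V `|` V') `<=` V `|` V')%fset := fsubset_refl _.
have [sd0 sdr sdp] := sdV_facts.
pose phi u r := sdV * \sum_j (\sum_p' bV j p' * c u p') * bV' j r.
pose w (s : basis (V `|` V')%fset) := (phi (restr V s) (restr V' s))^*.
have cw : forall u p, cmk (V `|` V')%fset V V' zo w u p = c u p.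
  move=> u p; rewrite /cmk.
  rewrite (eq_bigr (fun r => (sdV^-1 * \sum_i bV i p * bV' i r)^* *
      (sdV * \sum_j (\sum_p' bV j p' * c u p') * bV' j r))); last first.
    by move=> r _; rewrite /zo /w conjCK restr_mkA // restr_mkB // omega_mk.
  apply: (surj_calc (K:=C)).
  - by rewrite rmorphV /= ?sdr ?mulVf // unitfE.
  - exact: obV'.
  - exact: (col_orth (K:=C)).
pose T := \sum_a (w a)^* * w a.
have T0 : 0 <= T by apply: sumr_ge0 => a _; rewrite mulrC; exact: mul_conjC_ge0.
have pT : 0 < 1 + T by rewrite ltr_wpDr // ltr01.
pose t := (1 + T)^-1.
have t0 : 0 < t by rewrite /t invr_gt0.
pose s := sqrtC t.
have sr : s^* = s by apply: conj_Creal; apply: sqrtC_real; apply: ltW.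
have ss : s * s^* = t by rewrite sr -expr2 sqrtCK.
pose w' a := s * w a.
pose rho := fun a b => (w' a)^* * w' b.
have prho : pdo rho.
  split; first exact: (psd_rank1 (K:=C)).
  rewrite /optr.
  have -> : \sum_i rho i i = t * T.
    rewrite /T mulr_sumr; apply: eq_bigr => a _.
    by rewrite /rho /w' (scale_aux2 (K:=C)) ss.
  have -> : t * T = 1 - t.
    by apply: (aux_tT (K:=C)); rewrite /t mulVf // gt_eqF.
  by apply: (aux_le (K:=C)); apply: ltW.
have := H rho prho; rewrite !trOmega (MF l1 sVU sV'U dVV cU) (MF l2 sVU sV'U dVV cU).
have cw' : cmk (V `|` V')%fset V V' zo w' = fun u p => s * c u p.
  apply: functional_extensionality => u; apply: functional_extensionality => p.
  rewrite -cw /cmk mulr_sumr; apply: eq_bigr => r _.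
  exact: (scale_aux3 (K:=C)).
rewrite cw' !Qf_scale ss.
by rewrite ler_pM2l.
Qed.

End Choi.

Lemma extop_id (U : {fset nat}) (M : op U) : @extop U U M = M.
Proof.
apply: functional_extensionality => s; apply: functional_extensionality => t.
rewrite extopE !restr_id.
have -> : agree U s t = true.
  by apply/forallP => x; rewrite (valP x).
by rewrite mulr1.
Qed.

Lemma agree_restr (W X : {fset nat}) (s t : basis X) :
  (restr W s == restr W t) && agree W s t = (s == t).
Proof.
apply/andP/eqP => [[/eqP e /forallP a]|->]; last first.
  by split => //; apply/forallP => x; rewrite eqxx implybT.
apply/ffunP => x.
case: (boolP (val x \in W)) => xW; last by have := a x; rewrite xW => /eqP.
have [y [_ vy]] := insub_in xW.
have := congr1 (fun f : basis W => f y) e; rewrite !ffunE vy valK.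
done.
Qed.

Lemma extop_sub1 (W X : {fset nat}) (N : op W) s t :
  @extop W X (opsub (@opone W) N) s t = opsub (@opone X) (@extop W X N) s t.
Proof.
rewrite /opsub /opone !extopE mulrBl -natrM mulnb agree_restr.
done.
Qed.

Lemma tr_sub1 (X : {fset nat}) (A P : op X) :
  optr (opmul (opsub (@opone X) A) P) = optr P - optr (opmul A P).
Proof.
rewrite !trE /optr -sumrB; apply: eq_bigr => i _.
under eq_bigr => k _ do rewrite /opsub mulrBl.
rewrite sumrB; congr (_ - _).
rewrite /opone (bigD1 i) //= eqxx mul1r (@big1 C 0 +%R) ?addr0 // => k.
by rewrite eq_sym => /negbTE ->; rewrite mul0r.
Qed.

Lemma agree_mk (W X B : {fset nat}) a b a' b' :
  (B `<=` X)%fset -> (W `&` B = fset0)%fset ->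
  agree W (mk X W B a b) (mk X W B a' b') = (b == b').
Proof.
move=> /fsubsetP sBX dWB.
rewrite /agree; case: (boolP [forall x : X, _]) => [/forallP h|nh]; last first.
  apply/esym/negbTE; apply: contra nh => /eqP <-.
  by apply/forallP => x; apply/implyP => xW; rewrite !ffunE insubN.
apply/esym/eqP; apply/ffunP => y.
have [x [ex vx]] := insub_in (sBX _ (valP y)).
have yW : val x \notin W.
  rewrite vx; apply/negP => yW.
  have : val y \in (W `&` B)%fset by rewrite in_fsetI yW (valP y).
  by rewrite dWB in_fset0.
have := h x; rewrite yW /= !ffunE insubN // vx valK => /eqP.
done.
Qed.

Lemma psd_extop (W X : {fset nat}) (N : op W) : (W `<=` X)%fset -> psd N -> psd (@extop W X N).
Proof.
move=> sWX hN x.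
have [sBX dWB cX] := compl_props sWX.
set B := compl X W in sBX dWB cX.
have -> : \sum_i \sum_j (x i)^* * @extop W X N i j * x j =
    \sum_(b : basis B) qf N (fun a => x (mk X W B a b)).
  rewrite (sum_split _ sWX sBX dWB cX) exch; apply: eq_bigr => b _.
  rewrite /qf; apply: eq_bigr => a _.
  rewrite (sum_split _ sWX sBX dWB cX); apply: eq_bigr => a' _.
  under eq_bigr => b' _ do rewrite extopE restr_mkA // restr_mkA // agree_mk //.
  rewrite -[RHS](sum_delta' b (fun b' => (x (mk X W B a b))^* * N a a' * x (mk X W B a' b'))).
  apply: eq_bigr => b' _; rewrite eq_sym; ring.
by apply: sumr_ge0 => b _; apply: hN.
Qed.

Lemma qf_eq (X : {fset nat}) (A : op X) x : qf A x = \sum_i \sum_j (x i)^* * A i j * x j.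
Proof. by []. Qed.

Lemma aux_nat (K : numClosedFieldType) (n : nat) (a m y : K) :
  (n%:R * a)^* * m * y = n%:R * (a^* * m * y).
Proof. rewrite rmorphM /= conjC_nat; ring. Qed.

Section ExtTr.
Variables (V X : {fset nat}) (E : super V).
Hypotheses (trE0 : forall rho : op V, psd rho -> optr (E rho) <= optr rho)
  (sVX : (V `<=` X)%fset).

Let B := compl X V.
Let sBX : (B `<=` X)%fset. Proof. by case: (compl_props sVX). Qed.
Let dVB : (V `&` B = fset0)%fset. Proof. by case: (compl_props sVX). Qed.
Let cX : (X `<=` V `|` B)%fset. Proof. by case: (compl_props sVX). Qed.

Lemma psd_block (rho : op X) (r : basis B) : psd rho ->
  psd (fun u v : basis V => rho (mk X V B u r) (mk X V B v r)).
Proof.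
move=> hr x.
pose x' (s : basis X) := (restr B s == r)%:R * x (restr V s).
have := hr x'.
suff -> : \sum_i \sum_j (x' i)^* * rho i j * x' j =
          \sum_u \sum_v (x u)^* * rho (mk X V B u r) (mk X V B v r) * x v by [].
rewrite (sum_split _ sVX sBX dVB cX); apply: eq_bigr => u _.
transitivity (\sum_(r1 : basis B) (r1 == r)%:R *
   \sum_(v : basis V) \sum_(r2 : basis B) (x u)^* * rho (mk X V B u r1) (mk X V B v r2) * ((r2 == r)%:R * x v)).
  apply: eq_bigr => r1 _.
  rewrite (sum_split _ sVX sBX dVB cX) mulr_sumr; apply: eq_bigr => v _.
  rewrite mulr_sumr; apply: eq_bigr => r2 _.
  rewrite /x' !restr_mkA // !restr_mkB //; exact: (aux_nat (K:=C)).
rewrite sum_delta; apply: eq_bigr => v _.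
rewrite -[RHS](sum_delta' r (fun r2 => (x u)^* * rho (mk X V B u r) (mk X V B v r2) * x v)).
apply: eq_bigr => r2 _; rewrite eq_sym; ring.
Qed.

Lemma ext_tr (rho : op X) : psd rho -> optr (ext E rho) <= optr rho.
Proof.
move=> hr.
pose rr (r : basis B) := fun u v : basis V => rho (mk X V B u r) (mk X V B v r).
have e1 : optr (ext E rho) = \sum_(r : basis B) optr (E (rr r)).
  rewrite /optr (sum_split _ sVX sBX dVB cX) exch; apply: eq_bigr => r _.
  apply: eq_bigr => p _; rewrite /ext restr_mkA //; congr (E _ p p).
  by apply: functional_extensionality => u; apply: functional_extensionality => v; rewrite !glue_mk.
have e2 : optr rho = \sum_(r : basis B) optr (rr r).
  by rewrite /optr (sum_split _ sVX sBX dVB cX) exch.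
rewrite e1 e2; apply: ler_sum => r _; apply: trE0; exact: psd_block.
Qed.

End ExtTr.

Lemma card_fsT (V : {fset nat}) : #|{: V}| = #|` V|.
Proof. by rewrite -(card_fsub (fsubset_refl V)) fsubT cardsT. Qed.

Lemma card_basis (V : {fset nat}) : #|{: basis V}| = (2 ^ #|` V|)%N.
Proof. by rewrite card_ffun card_bool card_fsT. Qed.

Section Alg3.
Variable K : numClosedFieldType.

Lemma sum4_swapK (I J L M : finType) (f : I -> J -> L -> M -> K) :
  \sum_(i : I) \sum_(j : J) \sum_(l : L) \sum_(m : M) f i j l m =
  \sum_(l : L) \sum_(m : M) \sum_(i : I) \sum_(j : J) f i j l m.
Proof.
rewrite (sum3_swap (fun i j l => \sum_(m : M) f i j l m)).
apply: eq_bigr => l _.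
exact: sum3_swap.
Qed.

Lemma omega_norm_gen (I J : finType) (b : I -> I -> K) (b' : I -> J -> K) (ka : K) :
  (forall i j, \sum_s (b i s)^* * b j s = (i == j)%:R) ->
  (forall i j, \sum_s (b' i s)^* * b' j s = (i == j)%:R) ->
  \sum_(p : I) \sum_(r : J) (ka * \sum_i b i p * b' i r) * (ka * \sum_j b j p * b' j r)^*
   = ka * ka^* * #|I|%:R.
Proof.
move=> ob ob'.
transitivity (\sum_(p : I) \sum_(r : J) \sum_(i : I) \sum_(j : I)
   ka * ka^* * (((b j p)^* * b i p) * ((b' j r)^* * b' i r))).
  apply: eq_bigr => p _; apply: eq_bigr => r _.
  rewrite rmorphM rmorph_sum /= mulr_sumr mulr_suml.
  transitivity (\sum_(i : I) ka * (b i p * b' i r) * (ka^* * \sum_(j : I) (b j p * b' j r)^*)).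
    by apply: eq_bigr => i _; rewrite mulr_sumr.
  apply: eq_bigr => i _; rewrite !mulr_sumr; apply: eq_bigr => j _.
  rewrite rmorphM /=; ring.
rewrite sum4_swapK.
transitivity (\sum_(i : I) \sum_(j : I) ka * ka^* * ((j == i)%:R * (j == i)%:R)).
  apply: eq_bigr => i _; apply: eq_bigr => j _.
  rewrite -{1}(ob j i) -(ob' j i) mulr_suml mulr_sumr; apply: eq_bigr => p _.
  rewrite mulr_sumr mulr_sumr; apply: eq_bigr => r _; ring.
transitivity (\sum_(i : I) ka * ka^*).
  apply: eq_bigr => i _.
  rewrite -[RHS](sum_deltaK i (fun j => ka * ka^*)); apply: eq_bigr => j _.
  by case: (j == i); rewrite ?mulr1 ?mul1r ?mulr0 ?mul0r.
by rewrite sumr_const mulr_natr.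
Qed.

Lemma CS_gen (I : finType) (om : I -> K) : \sum_i om i * (om i)^* = 1 ->
  psdI (fun a b => (a == b)%:R - om a * (om b)^*).
Proof.
move=> n1 x.
pose S := \sum_i (x i)^* * om i.
pose y i := x i - S^* * om i.
have e1 : qf (fun a b => (a == b)%:R - om a * (om b)^*) x = \sum_i (x i)^* * x i - S * S^*.
  rewrite /qf /S rmorph_sum /= mulr_suml -sumrB; apply: eq_bigr => i _.
  transitivity (\sum_j ((x i)^* * x j * (i == j)%:R - (x i)^* * om i * ((x j)^* * om j)^*)).
    apply: eq_bigr => j _; rewrite rmorphM /= conjCK; ring.
  by rewrite sumrB sum_deltaK' mulr_sumr.
have e2 : \sum_i (y i)^* * y i = \sum_i (x i)^* * x i - S * S^*.
  transitivity (\sum_i ((x i)^* * x i - S^* * ((x i)^* * om i) - S * (om i)^* * x i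
       + S * S^* * (om i * (om i)^*))).
    apply: eq_bigr => i _; rewrite /y rmorphB rmorphM /= conjCK; ring.
  rewrite big_split /= !sumrB -!mulr_sumr n1 /S rmorph_sum /=.
  have -> : \sum_i (\sum_i0 (x i0)^* * om i0) * (om i)^* * x i =
            (\sum_i0 (x i0)^* * om i0) * \sum_i ((x i)^* * om i)^*.
    rewrite mulr_sumr; apply: eq_bigr => i _; rewrite rmorphM /= conjCK; ring.
  ring.
rewrite e1 -e2; apply: sumr_ge0 => i _; rewrite mulrC; exact: mul_conjC_ge0.
Qed.

End Alg3.

Section OmegaFacts.
Variables (V V' : {fset nat}) (bV : basis V -> basis V -> C) (bV' : basis V -> basis V' -> C).
Hypotheses (dVV : (V `&` V' = fset0)%fset) (obV : orthonormal_basis bV)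
  (obV' : orthonormal_basis bV').

Lemma omega_norm : \sum_s omega bV bV' s * (omega bV bV' s)^* = 1.
Proof.
have sVU : (V `<=` V `|` V')%fset := fsubsetUl V V'.
have sV'U : (V' `<=` V `|` V')%fset := fsubsetUr V V'.
have cU : ((V `|` V') `<=` V `|` V')%fset := fsubset_refl _.
have [sd0 sdr sdp] := sdV_facts V.
rewrite (sum_split _ sVU sV'U dVV cU).
under eq_bigr => p _ do under eq_bigr => r _ do rewrite (omega_mk bV bV' dVV).
rewrite (omega_norm_gen (K:=C)) //.
rewrite rmorphV ?unitfE //= sdr card_basis.
have -> : ((2 ^ #|` V|)%N%:R : C) = sdV V * sdV V by rewrite -expr2 /sdV sqrtCK.
by rewrite -invfM mulVf // mulf_neq0.
Qed.

Lemma Omega_psd : psd (Omega bV bV').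
Proof.
have -> : Omega bV bV' = fun a b => (zo bV bV' a)^* * zo bV bV' b.
  apply: functional_extensionality => a; apply: functional_extensionality => b.
  by rewrite /Omega /zo conjCK.
exact: (psd_rank1 (K:=C)).
Qed.

Lemma Omega_compl_psd : psd (opsub (@opone _) (Omega bV bV')).
Proof. exact: (CS_gen (K:=C) omega_norm). Qed.

End OmegaFacts.

Section Aux4.
Variable K : numClosedFieldType.
Lemma aux_subsub (a y : K) : a - (a - y) = y.
Proof. ring. Qed.
Lemma aux_ineq (r a f b : K) : r - a <= f - b + r - f -> b <= a.
Proof.
have -> : f - b + r - f = r - b by ring.
by rewrite lerD2l lerN2.
Qed.
Lemma aux_ineq2 (a nE r e nF f : K) : a <= nE + r - e -> f - nF <= e - nE -> a <= nF + r - f.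
Proof.
move=> h1 h2; apply: (le_trans h1).
have -> : nE + r - e = r - (e - nE) by ring.
have -> : nF + r - f = r - (f - nF) by ring.
by rewrite lerD2l lerN2.
Qed.
Lemma aux_eq (r f o : K) : r - o <= f - o + r - f.
Proof. have -> : f - o + r - f = r - o by ring. exact: lexx. Qed.
Lemma qf_sub1 (I : finType) (A : I -> I -> K) x :
  qf (fun a b => (a == b)%:R - A a b) x = \sum_i (x i)^* * x i - qf A x.
Proof.
rewrite /qf -sumrB; apply: eq_bigr => i _.
transitivity (\sum_j ((x i)^* * x j * (i == j)%:R - (x i)^* * A i j * x j)).
  by apply: eq_bigr => j _; ring.
by rewrite sumrB sum_deltaK'.
Qed.
Lemma qf_tr (I : finType) (A : I -> I -> K) x :
  qf A x = \sum_i \sum_k A i k * (x k * (x i)^*).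
Proof. rewrite /qf; apply: eq_bigr => i _; apply: eq_bigr => k _; ring. Qed.
End Aux4.

Lemma extop_sub (W X : {fset nat}) (N : op W) :
  @extop W X (opsub (@opone W) N) = opsub (@opone X) (@extop W X N).
Proof.
apply: functional_extensionality => s; apply: functional_extensionality => t.
exact: extop_sub1.
Qed.

Lemma opsubsub (X : {fset nat}) (A : op X) : opsub (@opone X) (opsub (@opone X) A) = A.
Proof.
apply: functional_extensionality => s; apply: functional_extensionality => t.
exact: (aux_subsub (K:=C)).
Qed.

Lemma psd_rank1' (X : {fset nat}) (x : basis X -> C) : psd (fun a b => x a * (x b)^*).
Proof.
have -> : (fun a b => x a * (x b)^*) = (fun a b => ((x a)^*)^* * (x b)^*).
  apply: functional_extensionality => a; apply: functional_extensionality => b.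
  by rewrite conjCK.
exact: (psd_rank1 (K:=C)).
Qed.

Section YFacts.
Variables (V V' : {fset nat}) (bV : basis V -> basis V -> C) (bV' : basis V -> basis V' -> C)
  (E : super V).
Hypotheses (dVV : (V `&` V' = fset0)%fset) (obV : orthonormal_basis bV)
  (obV' : orthonormal_basis bV') (DE : DProg E).

Let sVU : (V `<=` V `|` V')%fset := fsubsetUl V V'.

Lemma Y_tr (rho : op (V `|` V')%fset) :
  optr (opmul (ext (adjoint E) (Omega bV bV')) rho) = optr (opmul (Omega bV bV') (ext E rho)).
Proof.
case: DE => lE _ _.
by rewrite -{1}(extop_id (ext _ _)) (dual _ _ lE sVU (fsubset_refl _)) extop_id.
Qed.

Lemma Y_psd : psd (ext (adjoint E) (Omega bV bV')).
Proof.
case: DE => lE cpE _ x.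
rewrite -/(qf _ x) (qf_tr (K:=C)) -trE Y_tr.
apply: (tp (K:=C)); first exact: Omega_psd.
apply: cpE => //; exact: psd_rank1'.
Qed.

Lemma Y_compl_psd : psd (opsub (@opone _) (ext (adjoint E) (Omega bV bV'))).
Proof.
case: DE => lE cpE trE0 x.
rewrite -/(qf _ x) (qf_sub1 (K:=C)) (qf_tr (K:=C)) -trE Y_tr.
set rho := fun a b => x a * (x b)^*.
have prho : psd rho by exact: psd_rank1'.
have pP : psd (ext E rho) by apply: cpE.
have h1 : optr (opmul (Omega bV bV') (ext E rho)) <= optr (ext E rho).
  have := tp (K:=C) (Omega_compl_psd dVV obV obV') pP.
  by rewrite -trE tr_sub1 subr_ge0.
have h2 : optr (ext E rho) <= optr rho by apply: ext_tr.
have -> : \sum_i (x i)^* * x i = optr rho.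
  by rewrite /optr; apply: eq_bigr => i _; rewrite mulrC.
by rewrite subr_ge0; apply: le_trans h1 h2.
Qed.

End YFacts.

Theorem theorem4p3 (V V' : {fset nat}) (E F : super V)
    (bV : basis V -> basis V -> C) (bV' : basis V -> basis V' -> C) :
  DProg E -> DProg F ->
  #|` V'| = #|` V| -> (V `&` V' = fset0)%fset ->
  orthonormal_basis bV -> orthonormal_basis bV' ->
  (refT E F <->
     sat_tot F (ext (adjoint E) (Omega bV bV')) (Omega bV bV')) /\
  (refP E F <->
     sat_par F (opsub (@opone (V `|` V')%fset) (ext (adjoint E) (Omega bV bV')))
               (opsub (@opone (V `|` V')%fset) (Omega bV bV'))).
Proof.
move=> DE DF _ dVV obV obV'.
have [lE cpE trE0] := DE.
have [lF cpF trF0] := DF.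
have sVU : (V `<=` V `|` V')%fset := fsubsetUl V V'.
have sUU : (V `|` (V `|` V') `<=` V `|` V')%fset.
  by rewrite fsubUset sVU fsubset_refl.
have sub_of : forall X : {fset nat}, (V `|` (V `|` V') `<=` X)%fset ->
    (V `<=` X)%fset /\ ((V `|` V') `<=` X)%fset.
  by move=> X; rewrite fsubUset => /andP[].
have effY : effect (ext (adjoint E) (Omega bV bV')).
  split; first exact: Y_psd.
  exact: Y_compl_psd.
have effO : effect (Omega bV bV').
  split; first exact: Omega_psd.
  exact: Omega_compl_psd.
have effIY : effect (opsub (@opone _) (ext (adjoint E) (Omega bV bV'))).
  split; first exact: Y_compl_psd.
  rewrite opsubsub; exact: Y_psd.
have effIO : effect (opsub (@opone _) (Omega bV bV')).
  split; first exact: Omega_compl_psd.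
  rewrite opsubsub; exact: Omega_psd.
split; split.
- move=> hT; apply: hT => // X sX rho prho.
  have [sVX sUX] := sub_of X sX.
  by rewrite (dual _ _ lE sVU sUX).
- move=> H W M N eM eN hE X sX rho prho.
  have sVX : (V `<=` X)%fset by move: sX; rewrite fsubUset => /andP[].
  have sWX : (W `<=` X)%fset by move: sX; rewrite fsubUset => /andP[].
  have hQ : forall c, Qf E c <= Qf F c.
    apply: (choi_from dVV obV obV' lE lF) => r pr.
    have := H _ sUU r pr.
    by rewrite (dual _ _ lE sVU (fsubset_refl _)) !extop_id.
  apply: le_trans (hE X sX rho prho) _.
  apply: (key lE lF sVX hQ); last by case: prho.
  by apply: psd_extop => //; case: eN.
- move=> hP; apply: hP => // X sX rho prho.
  have [sVX sUX] := sub_of X sX.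
  rewrite !extop_sub !tr_sub1 (dual _ _ lE sVU sUX).
  exact: (aux_eq (K:=C)).
- move=> H W M N eM eN hE X sX rho prho.
  have sVX : (V `<=` X)%fset by move: sX; rewrite fsubUset => /andP[].
  have sWX : (W `<=` X)%fset by move: sX; rewrite fsubUset => /andP[].
  have hQ : forall c, Qf F c <= Qf E c.
    apply: (choi_from dVV obV obV' lF lE) => r pr.
    have := H _ sUU r pr.
    rewrite !extop_id !tr_sub1 (Y_tr _ _ DE).
    exact: (aux_ineq (K:=C)).
  apply: (aux_ineq2 (K:=C) (hE X sX rho prho)).
  rewrite -!tr_sub1 -!extop_sub.
  apply: (key lF lE sVX hQ); last by case: prho.
  by apply: psd_extop => //; case: eN.
Qed.
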